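(* Let $t\ge 2$ and $k\ge 2$ be integers. Then there is a constant $c_{t,k}>0$ depending only on $t$ and $k$ such that for all sufficiently large $n$, \[ \operatorname{br}_k(C_{2t};K_{n,n}) \le \frac{c_{t,k}\, n^2}{\log^2 n}. \]
   Context: $C_{2t}$ denotes the cycle of length $2t$ and $K_{n,n}$ the complete bipartite graph with both parts of size $n$. For bipartite graphs $G_1,G_2$ and an integer $k\ge1$, the multicolor bipartite Ramsey number $\operatorname{br}_k(G_1;G_2)$ is the least integer $N$ such that every coloring of the edges of $K_{N,N}$ with $k+1$ colors $1,\dots,k+1$ contains a monochromatic copy of $G_1$ in one of the colors $1,\dots,k$ or a monochromatic copy of $G_2$ in color $k+1$. Rounding is ignored. *)

(* Defs.v *)
From HB Require Import structures.
From mathcomp Require Import all_boot all_order all_algebra.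
Set Implicit Arguments. Unset Strict Implicit. Unset Printing Implicit Defensive.

(* An edge colouring of K_{N,N} with k+1 colours: left vertex i, right vertex j,
   colour c i j : 'I_k.+1.  Colour 1..k of the paper = values 0..k-1,
   colour k+1 of the paper = value k (ord_max). *)
Definition bcoloring (N k : nat) := 'I_N -> 'I_N -> 'I_k.+1.

Definition mono_cycle (N k t : nat) (c : bcoloring N k) (a : 'I_k.+1) : Prop :=
  exists (x y : 'I_t -> 'I_N), injective x /\ injective y /\
    forall i : 'I_t, c (x i) (y i) = a /\ c (x (ordS i)) (y i) = a.

Definition mono_Knn (N k n : nat) (c : bcoloring N k) (a : 'I_k.+1) : Prop :=
  exists (A B : {set 'I_N}), #|A| = n /\ #|B| = n /\
    forall x y, x \in A -> y \in B -> c x y = a.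

Definition br_arrows (k t n N : nat) : Prop :=
  forall c : bcoloring N k,
    (exists a : 'I_k.+1, (val a < k)%N /\ mono_cycle t c a)
    \/ mono_Knn n c ord_max.

(* br_k(C_{2t}; K_{n,n}) <= x  iff some N <= x satisfies br_arrows
   (br is the least such N). *)

(* Main.v *)
Require Import Defs.
From HB Require Import structures.
From mathcomp Require Import all_boot all_order all_algebra.
From mathcomp Require Import ring lra zify.
Import Order.TTheory GRing.Theory Num.Theory.
Import Defs.
Set Implicit Arguments. Unset Strict Implicit. Unset Printing Implicit Defensive.

Lemma pick_out (T : finType) (S E : {set T}) (f : T -> bool) t :
  (#|E| <= t)%N -> (t < \sum_(w in S) f w)%N -> exists2 w, w \in S & f w && (w \notin E).
Proof.
move=> hE hS.
case: (boolP [exists w in S, f w && (w \notin E)]).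
  by case/exists_inP => w wS fw; exists w.
move=> /exists_inPn hn.
have : (\sum_(w in S) f w <= \sum_(w in S) (w \in E))%N.
  apply: leq_sum => w wS; move: (hn w wS); case: (f w) => //=; rewrite negbK => ->.
  done.
have : (\sum_(w in S) (w \in E) <= #|E|)%N.
  rewrite -sum1_card [X in (_ <= X)%N]big_mkcond /=.
  rewrite (big_mkcond (fun w => w \in S)) /=.
  by apply: leq_sum => w _; case: (w \in S); case: (w \in E).
lia.
Qed.
Section Mindeg.
Variables (U W : finType) (H : U -> W -> bool).
Definition eS (P : {set U}) (Q : {set W}) := (\sum_(u in P) \sum_(w in Q) H u w)%N.

Lemma mindeg K : forall n (P : {set U}) (Q : {set W}), (#|P| + #|Q| <= n)%N ->
  (K * (#|P| + #|Q|) < eS P Q)%N ->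
  exists (P' : {set U}) (Q' : {set W}), [/\ P' \subset P, Q' \subset Q, P' != set0,
     forall u, u \in P' -> (K < \sum_(w in Q') H u w)%N &
     forall w, w \in Q' -> (K < \sum_(u in P') H u w)%N].
Proof.
elim=> [|n IH] P Q.
  rewrite leqn0 addn_eq0 => /andP [/eqP /cards0_eq -> _].
  by rewrite /eS big_set0.
move=> Hn He.
case: (boolP [exists u in P, (\sum_(w in Q) H u w <= K)%N]).
  case/exists_inP => u uP du.
  have [P' [Q' [s1 s2 s3 s4 s5]]] : exists (P' : {set U}) (Q' : {set W}), [/\ P' \subset P :\ u, Q' \subset Q, P' != set0,
     forall u, u \in P' -> (K < \sum_(w in Q') H u w)%N &
     forall w, w \in Q' -> (K < \sum_(u in P') H u w)%N].
    apply: IH.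
      by move: Hn; rewrite (cardsD1 u P) uP; lia.
    move: He; rewrite /eS (bigD1 u uP) /= (cardsD1 u P) uP.
    have -> : (\sum_(i in P | i != u) \sum_(w in Q) H i w =
               \sum_(i in P :\ u) \sum_(w in Q) H i w)%N.
      by apply: eq_bigl => i; rewrite !inE andbC.
    nia.
  exists P', Q'; split=> //.
  by apply: subset_trans s1 _; apply: subsetDl.
case: (boolP [exists w in Q, (\sum_(u in P) H u w <= K)%N]).
  case/exists_inP => w wQ dw Hu.
  have [P' [Q' [s1 s2 s3 s4 s5]]] : exists (P' : {set U}) (Q' : {set W}), [/\ P' \subset P, Q' \subset Q :\ w, P' != set0,
     forall u, u \in P' -> (K < \sum_(w in Q') H u w)%N &
     forall w, w \in Q' -> (K < \sum_(u in P') H u w)%N].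
    apply: IH.
      by move: Hn; rewrite (cardsD1 w Q) wQ; lia.
    move: He; rewrite /eS exchange_big (bigD1 w wQ) /= (cardsD1 w Q) wQ.
    have -> : (\sum_(i in Q | i != w) \sum_(u in P) H u i =
               \sum_(i in Q :\ w) \sum_(u in P) H u i)%N.
      by apply: eq_bigl => i; rewrite !inE andbC.
    move=> He2; rewrite /eS exchange_big /=; nia.
  exists P', Q'; split=> //.
  by apply: subset_trans s2 _; apply: subsetDl.
move=> Hw Hu.
exists P, Q; split=> //.
- apply/eqP => P0; move: He; rewrite /eS P0 big_set0; lia.
- move=> u uP; rewrite ltnNge; apply/negP => du.
  by move/negP: Hu; apply; apply/exists_inP; exists u.
- move=> w wQ; rewrite ltnNge; apply/negP => dw.
  by move/negP: Hw; apply; apply/exists_inP; exists w.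
Qed.
End Mindeg.
Section Greedy.
Variables (N k t : nat) (c : bcoloring N k) (a : 'I_k.+1) (x : 'I_N) (P' Q' : {set 'I_N}).
Hypotheses (hP : forall y, y \in P' -> c x y = a) (hQ : forall w, w \in Q' -> w != x)
  (hP0 : P' != set0)
  (dP : forall y, y \in P' -> (t < \sum_(w in Q') (c w y == a))%N)
  (dQ : forall w, w \in Q' -> (t < \sum_(y in P') (c w y == a))%N).

Definition ginv j (X Y : nat -> 'I_N) := X 0%N = x /\ (forall i, (i < j)%N -> Y i \in P') /\
  (forall i, (0 < i < j)%N -> X i \in Q') /\
  (forall i1 i2, (i1 < j)%N -> (i2 < j)%N -> X i1 = X i2 -> i1 = i2) /\
  (forall i1 i2, (i1 < j)%N -> (i2 < j)%N -> Y i1 = Y i2 -> i1 = i2) /\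
  (forall i, (i < j)%N -> c (X i) (Y i) = a) /\
  (forall i, (i.+1 < j)%N -> c (X i.+1) (Y i) = a).

Lemma img_in (X : nat -> 'I_N) j i : (i < j)%N -> X i \in [set X (nat_of_ord i0) | i0 : 'I_j].
Proof. by move=> hi; apply/imsetP; exists (Ordinal hi). Qed.

Lemma greedy j : (0 < j <= t)%N -> exists X Y, ginv j X Y.
Proof.
elim: j => // j IH /andP [_ hj].
case: j IH hj => [|j] IH hj.
  case/set0Pn: hP0 => y0 y0P.
  exists (fun _ => x), (fun _ => y0); do !split=> //.
  - by move=> i i1; case: i i1.
  - by move=> i1 i2; case: i1; case: i2.
  - by move=> i1 i2; case: i1; case: i2.
  - by move=> i _; apply: hP.
have [X [Y [hX0 [hY [hXQ [iX [iY [e1 e2]]]]]]]] := IH (ltnW hj).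
have cardX : (#|[set X (nat_of_ord i0) | i0 : 'I_j.+1]| <= t)%N.
  by apply: leq_trans (leq_imset_card _ _) _; rewrite card_ord; lia.
have cardY : (#|[set Y (nat_of_ord i0) | i0 : 'I_j.+1]| <= t)%N.
  by apply: leq_trans (leq_imset_card _ _) _; rewrite card_ord; lia.
have YjP : Y j \in P' by apply: hY.
have [xn xnQ /andP [/eqP cxn xnX]] := pick_out cardX (dP YjP).
have [yn ynP /andP [/eqP cyn ynY]] := pick_out cardY (dQ xnQ).
exists (fun i => if i == j.+1 then xn else X i), (fun i => if i == j.+1 then yn else Y i).
split; [|split; [|split; [|split; [|split; [|split]]]]].
- by [].
- move=> i hi; case: eqP => // /eqP ne; apply: hY; lia.
- move=> i hi; case: eqP => // /eqP ne; apply: hXQ; lia.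
- move=> i1 i2 h1 h2.
  case: (eqVneq i1 j.+1) => [-> | n1]; case: (eqVneq i2 j.+1) => [-> | n2] //=.
  + move=> E; have h : (i2 < j.+1)%N by lia.
    by move: xnX; rewrite E img_in.
  + move=> E; have h : (i1 < j.+1)%N by lia.
    by move: xnX; rewrite -E img_in.
  + by apply: iX; lia.
- move=> i1 i2 h1 h2.
  case: (eqVneq i1 j.+1) => [-> | n1]; case: (eqVneq i2 j.+1) => [-> | n2] //=.
  + move=> E; have h : (i2 < j.+1)%N by lia.
    by move: ynY; rewrite E img_in.
  + move=> E; have h : (i1 < j.+1)%N by lia.
    by move: ynY; rewrite -E img_in.
  + by apply: iY; lia.
- move=> i hi; case: eqP => // /eqP ne; apply: e1; lia.
- move=> i hi; case: (eqVneq i.+1 j.+1) => [[->] | ne].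
    by rewrite (_ : (j == j.+1) = false) ?cxn //; lia.
  have -> : (i == j.+1) = false by lia.
  by apply: e2; lia.
Qed.

Lemma greedy_cycle : (0 < t)%N -> mono_cycle t c a.
Proof.
move=> t0.
have [X [Y [hX0 [hY [hXQ [iX [iY [e1 e2]]]]]]]] : exists X Y, ginv t X Y.
  by apply: greedy; rewrite t0 leqnn.
exists (fun i => X (nat_of_ord i)), (fun i => Y (nat_of_ord i)); split.
  by move=> i1 i2 /iX E; apply: val_inj; apply: E.
split.
  by move=> i1 i2 /iY E; apply: val_inj; apply: E.
move=> i; split; first by apply: e1.
rewrite /=.
have hi := ltn_ord i.
case: (ltnP i.+1 t) => h.
  by rewrite modn_small //; apply: e2.
have -> : (i.+1 = t) by lia.
by rewrite modnn hX0; apply: hP; apply: hY.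
Qed.
End Greedy.
Lemma cs_nat (T : finType) (f : T -> nat) :
  ((\sum_i f i) * (\sum_i f i) <= #|T| * \sum_i f i * f i)%N.
Proof.
rewrite big_distrl /=.
have E : forall i, ((f i * \sum_j f j) = \sum_j f i * f j)%N.
  by move=> i; rewrite big_distrr.
rewrite (eq_bigr _ (fun i _ => E i)).
suff : (2 * \sum_i \sum_j f i * f j <= 2 * (#|T| * \sum_i f i * f i))%N by rewrite leq_pmul2l.
rewrite big_distrr /=.
apply: (@leq_trans (\sum_i \sum_j (f i * f i + f j * f j))%N).
  apply: leq_sum => i _; rewrite big_distrr /=; apply: leq_sum => j _; move: (f i) (f j) => u v; case: (leqP u v) => h; [have [d ->] : exists d, v = u + d by exists (v - u); lia | have [d ->] : exists d, u = v + d by exists (u - v); lia]; nia.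
rewrite (eq_bigr (fun i => #|T| * (f i * f i) + \sum_j f j * f j)%N); last first.
  by move=> i _; rewrite big_split /= sum_nat_const.
rewrite big_split /= sum_nat_const -big_distrr /=; rewrite (_ : #|xpredT| = #|T|) //; lia.
Qed.

Definition ecol N k (c : bcoloring N k) (a : 'I_k.+1) :=
  (\sum_(x : 'I_N) \sum_(y : 'I_N) (c x y == a))%N.

Lemma partA N k t (c : bcoloring N k) (a : 'I_k.+1) : (0 < t)%N -> ~ mono_cycle t c a ->
  (ecol c a * ecol c a <= (t + 1) * N * ecol c a + t * (N * N * N))%N.
Proof.
move=> t0 nmc; set e := ecol c a.
pose H := fun (u w : 'I_N) => c w u == a.
pose Px := fun x => [set y | c x y == a].
pose Qx := fun x : 'I_N => [set w | w != x].
have step1 : forall x, (eS H (Px x) (Qx x) <= t * (#|Px x| + #|Qx x|))%N.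
  move=> x; rewrite leqNgt; apply/negP => hlt.
  have [P' [Q' [s1 s2 s3 s4 s5]]] := mindeg (leqnn _) hlt.
  have hP : forall y, y \in P' -> c x y = a.
    by move=> y /(subsetP s1); rewrite inE => /eqP.
  have hQ : forall w, w \in Q' -> w != x.
    by move=> w /(subsetP s2); rewrite inE.
  by apply: nmc; apply: (@greedy_cycle N k t c a x P' Q').
pose D := fun y => (\sum_(w : 'I_N) (c w y == a))%N.
have step3 : (\sum_x eS H (Px x) (Qx x) + e = \sum_y D y * D y)%N.
  rewrite /e -big_split /= /eS.
  rewrite (eq_bigr (fun x => \sum_y (c x y == a) * (\sum_(w in Qx x) H y w + 1))%N); last first.
    move=> x _; rewrite (big_mkcond (fun y => y \in Px x)) /= -big_split /=.
    by apply: eq_bigr => y _; rewrite inE; case: (c x y == a); rewrite ?mul1n ?mul0n ?add0n ?addn1.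
  rewrite exchange_big /=; apply: eq_bigr => y _.
  rewrite big_distrl /=.
  apply: eq_bigr => x _.
  case: eqP => hc; last by rewrite mul0n.
  rewrite /= !mul1n /D [in RHS](bigD1 x) //= hc eqxx addnC; congr (_ + _)%N.
  by apply: eq_bigl => w; rewrite inE.
have he : e = (\sum_y D y)%N by rewrite /e exchange_big.
have step2 : (\sum_x eS H (Px x) (Qx x) <= t * (e + N * N))%N.
  apply: (@leq_trans (\sum_x t * (#|Px x| + N))%N).
    apply: leq_sum => x _; apply: leq_trans (step1 x) _.
    by rewrite leq_mul2l leq_add2l -[X in (_ <= X)%N]card_ord max_card orbT.
  rewrite -big_distrr /= big_split /= sum_nat_const card_ord.
  suff -> : (\sum_(i < N) #|Px i| = e)%N by [].
  by apply: eq_bigr => x _; rewrite -sum1_card big_mkcond /=; apply: eq_bigr => y _; rewrite inE; case: (_ == _).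
have := cs_nat D; rewrite -he card_ord -step3.
nia.
Qed.

Lemma eb (t s e : nat) : (0 < s)%N ->
  (e * e <= (t + 1) * (s * s) * e + t * ((s * s) * (s * s) * (s * s)))%N ->
  (e <= 2 * (t + 1) * (s * (s * s)))%N.
Proof.
move=> s0 h; rewrite leqNgt; apply/negP => hlt.
move: hlt h; set q := (s * (s * s))%N => hlt h.
have hq : (s * s <= q)%N by rewrite /q -{1}(mul1n (s * s)) leq_mul2r s0 orbT.
have hqq : (s * s * (s * s) * (s * s) = q * q)%N by rewrite /q; ring.
move: (s * s)%N hq h hqq => S hq h hqq.
have hA : (2 * ((t + 1) * S * e) < e * e)%N.
  have : (2 * (t + 1) * S < e)%N by apply: leq_ltn_trans hlt; nia.
  move=> h1; have e0 : (0 < e)%N by lia. nia.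
have hB : (4 * (t * (q * q)) < e * e)%N.
  have h4 : (2 * (t + 1) * q * (2 * (t + 1) * q) < e * e)%N by apply: ltn_mul.
  apply: leq_ltn_trans h4; nia.
rewrite hqq in h.
lia.
Qed.

Lemma ffact_cmp (N n D : nat) : (n + D <= N)%N -> forall j, (j <= n)%N ->
  ((N - n - D) ^ j * N ^_ j <= (N - D) ^_ j * (N - n) ^ j)%N.
Proof.
move=> hN; elim=> [|j IH] hj; first by rewrite !expn0 !ffactn0.
rewrite !ffactnSr !expnS.
have h1 : ((N - n - D) * (N - j) <= (N - D - j) * (N - n))%N.
  have [r ->] : exists r, N = n + D + r by exists (N - n - D); lia.
  have [u ->] : exists u, n = j + u.+1 by exists (n - j.+1); lia.
  nia.
have := IH (ltnW hj).
move: ((N - n - D) ^ j)%N (N ^_ j) ((N - D) ^_ j) ((N - n) ^ j)%N h1 => a b c d h1 h2.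
rewrite (_ : ((N - n - D) * a * (b * (N - j)) = (a * b) * ((N - n - D) * (N - j)))%N); last by ring.
rewrite (_ : (c * (N - D - j) * ((N - n) * d) = (c * d) * ((N - D - j) * (N - n)))%N); last by ring.
by apply: leq_mul.
Qed.

Lemma cardS_sum (T : finType) (P : pred T) : #|[set x | P x]| = (\sum_x P x)%N.
Proof.
rewrite -sum1_card big_mkcond /=; apply: eq_bigr => x _; rewrite inE; by case: (P x).
Qed.

Lemma kst N n D (Hr : 'I_N -> 'I_N -> bool) :
  (0 < n)%N -> (n + D < N)%N ->
  (2 * (\sum_x \sum_y ~~ Hr x y) <= N * D.+1)%N ->
  (2 * n * (N - n) ^ n <= N * (N - n - D) ^ n)%N ->
  exists A B : {set 'I_N}, [/\ #|A| = n, #|B| = n & forall x y, x \in A -> y \in B -> Hr x y].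
Proof.
move=> n0 hnD hm hcore.
pose miss x := (\sum_y ~~ Hr x y)%N.
pose NH x := [set y | Hr x y].
have hNH : forall x, (#|NH x| + miss x = N)%N.
  move=> x; rewrite /NH cardS_sum /miss -big_split /=.
  rewrite -[X in _ = X]card_ord -sum1_card; apply: eq_bigr => y _; by case: (Hr x y).
pose good := [set x | (miss x <= D)%N].
have hbad : (2 * #|~: good| <= N)%N.
  have : (#|~: good| * D.+1 <= \sum_x miss x)%N.
    rewrite -sum_nat_const; apply: (@leq_trans (\sum_(x in ~: good) miss x)).
      by apply: leq_sum => x; rewrite !inE -ltnNge.
    by rewrite [X in (_ <= X)%N](bigID (fun x => x \in ~: good)) /= leq_addr.
  move=> h; rewrite -(@leq_pmul2r D.+1) // -mulnA; apply: leq_trans hm; rewrite leq_mul2l; apply/orP; right; exact: h.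
have hgood : (N <= 2 * #|good|)%N.
  have := cardsC good; rewrite card_ord; lia.
have hsum : (#|good| * 'C(N - D, n) <= \sum_x 'C(#|NH x|, n))%N.
  rewrite -sum_nat_const; apply: (@leq_trans (\sum_(x in good) 'C(#|NH x|, n))).
    apply: leq_sum => x; rewrite inE => hx; apply: leq_bin2l.
    have := hNH x; lia.
  by rewrite [X in (_ <= X)%N](bigID (fun x => x \in good)) /= leq_addr.
have hkey : (n * 'C(N, n) <= #|good| * 'C(N - D, n))%N.
  have p1 : (0 < n`! * (N - n) ^ n)%N by rewrite muln_gt0 fact_gt0 expn_gt0; lia.
  rewrite -(leq_pmul2r p1).
  rewrite (_ : (n * 'C(N, n) * (n`! * (N - n) ^ n) = n * (N ^_ n) * (N - n) ^ n)%N); last first.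
    by rewrite -bin_ffact; ring.
  rewrite (_ : (#|good| * 'C(N - D, n) * (n`! * (N - n) ^ n) = #|good| * ((N - D) ^_ n * (N - n) ^ n))%N); last first.
    by rewrite -bin_ffact; ring.
  apply: (@leq_trans (#|good| * ((N - n - D) ^ n * N ^_ n))%N); last first.
    by rewrite leq_mul2l ffact_cmp ?orbT //; lia.
  rewrite (_ : (n * N ^_ n * (N - n) ^ n = (n * (N - n) ^ n) * N ^_ n)%N); last by ring.
  rewrite (_ : (#|good| * ((N - n - D) ^ n * N ^_ n) = (#|good| * (N - n - D) ^ n) * N ^_ n)%N); last by ring.
  rewrite leq_mul2r; apply/orP; right.
  rewrite -(@leq_pmul2l 2) //; apply: leq_trans (_ : N * (N - n - D) ^ n <= _)%N.
    by rewrite mulnA.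
  by rewrite mulnA leq_mul2r hgood orbT.
have hC : (0 < 'C(N, n))%N by rewrite bin_gt0; lia.
pose S (T : {set 'I_N}) := [set x | T \subset NH x].
have hdc : (\sum_x 'C(#|NH x|, n) = \sum_(T : {set 'I_N}) (#|T| == n) * #|S T|)%N.
  rewrite (eq_bigr (fun x => \sum_(T : {set 'I_N}) ((T \subset NH x) && (#|T| == n)))%N); last first.
    by move=> x _; rewrite -cards_draws -cardS_sum.
  rewrite exchange_big /=; apply: eq_bigr => T _.
  rewrite cardS_sum big_distrr /=; apply: eq_bigr => x _.
  by case: (T \subset NH x); case: (#|T| == n).
have [T /andP [hT hST]] : exists T : {set 'I_N}, (#|T| == n) && (n <= #|S T|)%N.
  case: (boolP [exists T : {set 'I_N}, (#|T| == n) && (n <= #|S T|)%N]) => [/existsP //| /existsPn hno]; exfalso.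
  have : (\sum_(T : {set 'I_N}) (#|T| == n) * #|S T| <= \sum_(T : {set 'I_N}) (#|T| == n) * n.-1)%N.
    apply: leq_sum => T _; have := hno T; case: (#|T| == n) => //= h.
    by rewrite !mul1n; lia.
  rewrite -big_distrl /= -cardS_sum card_draws card_ord -hdc.
  move=> h; have := leq_trans hkey hsum; have := leq_trans _ h.
  nia.
have : (0 < #|[set A : {set 'I_N} | A \subset S T & #|A| == n]|)%N.
  by rewrite cards_draws bin_gt0.
case/card_gt0P => A; rewrite inE => /andP [hA /eqP cA].
exists A, T; split=> //; first by apply/eqP.
move=> x y xA yT.
have := subsetP hA x xA; rewrite inE => /subsetP /(_ y yT).
by rewrite inE.
Qed.

From mathcomp Require Import all_classical all_reals all_analysis.
From mathcomp Require Import ring lra zify.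
Import Order.TTheory GRing.Theory Num.Theory.
Import Defs.
Local Open Scope ring_scope.


Section Core.
Variable R : realType.

Lemma expR_half (L : R) : expR (L / 2) * expR (L / 2) = expR L.
Proof. by rewrite -expRD; congr expR; field. Qed.

Lemma expR_sq_ge (L : R) : 0 <= L -> L ^+ 2 / 4 <= expR L.
Proof.
move=> L0; rewrite -expR_half.
have h := expR_ge1Dx (L / 2).
have : L / 2 <= expR (L / 2) by lra.
move=> h2; rewrite expr2.
have -> : L * L / 4 = (L / 2) * (L / 2) by field.
apply: ler_pM => //; lra.
Qed.

Lemma one_sub_ge (z : R) : 0 <= z <= 1/2 -> expR (- (2 * z)) <= 1 - z.
Proof.
move=> /andP [z0 z1].
rewrite expRN.
have e0 := expR_gt0 (2 * z).
rewrite -div1r ler_pdivrMr //.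
have h := expR_ge1Dx (2 * z).
have : 1 <= (1 - z) * (1 + 2 * z) by nra.
move=> h2; apply: le_trans h2 _; rewrite mulrC [X in _ <= X]mulrC.
apply: ler_wpM2r; lra.
Qed.
End Core.

Section Core2.
Variable R : realType.

Lemma core_real (g n : nat) : (1 <= g)%N -> (3 <= n)%N ->
  let s := Num.truncn ((16 * g)%:R * n%:R / ln (n%:R : R)) in
  (n + g * s < s * s)%N /\ (2 * n * (s * s - n) ^ n <= s * s * (s * s - n - g * s) ^ n)%N.
Proof.
move=> g1 n3 s.
set m : R := n%:R.
set L := ln m.
have m3 : 3 <= m by rewrite /m (ler_nat R 3 n).
have L0 : 0 < L by apply: ln_gt0; lra.
have Lm : L < m by apply: ln_sublinear; lra.
set gr : R := g%:R.
have g1r : 1 <= gr by rewrite /gr (ler_nat R 1 g).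
set w := (16 * g)%:R * m / L.
have wL : w * L = 16 * gr * m.
  by rewrite /w natrM /gr -mulrA mulrC -mulrA mulVf ?mulr1 ?mulrA; [ring | lra].
have w0 : 0 <= w.
  by rewrite /w divr_ge0 // ?mulr_ge0 //; lra.
have := truncn_itv w0; rewrite -/s => /andP [xl xu].
set x : R := s%:R.
have xu' : w < x + 1 by move: xu; rewrite -natr1.
have w16 : 16 * gr < w.
  have : 16 * gr * L < w * L by rewrite wL; nra.
  by rewrite ltr_pM2r.
have x2 : w <= 2 * x by lra.
have x0 : 0 < x by lra.
have em : expR L = m by rewrite /L lnK // posrE; lra.
have Lsq : L ^+ 2 <= 4 * m.
  have := @expR_sq_ge R L (ltW L0); rewrite em; lra.
set E := expR (L / 2).
have E0 : 0 < E by apply: expR_gt0.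
have EE : E * E = m by rewrite /E expR_half.
have LE : L ^+ 2 <= 16 * E.
  have := @expR_sq_ge R (L / 2) (ltac:(lra)); rewrite -/E.
  have -> : (L / 2) ^+ 2 / 4 = L ^+ 2 / 16 by field.
  lra.
have k1 : (16 * gr * m) ^+ 2 <= 4 * x ^+ 2 * L ^+ 2.
  rewrite -wL.
  have : w * L <= 2 * x * L by apply: ler_wpM2r; lra.
  move=> h; have h0 : 0 <= w * L by apply: mulr_ge0; lra.
  rewrite !expr2; nra.
have k2 : 16 * m <= x ^+ 2.
  have h1 : (16 * gr * m) ^+ 2 <= 16 * x ^+ 2 * m.
    apply: le_trans k1 _; have : 0 <= x ^+ 2 by apply: sqr_ge0.
    nra.
  have h2 : (16 * m) * m <= x ^+ 2 * m.
    move: h1; rewrite !expr2 => h1.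
    have : 1 <= gr * gr by nra.
    nra.
  by rewrite ler_pM2r in h2; lra.
set M := x ^+ 2 - m.
have M0 : x ^+ 2 / 2 <= M by rewrite /M; lra.
have xL : 8 * gr * m <= x * L by nra.
set z := gr * x / M.
have Mp : 0 < M by nra.
have zM : z * M = gr * x by rewrite /z divfK // gt_eqF.
have z0 : 0 <= z by rewrite /z divr_ge0 //; [nra | lra].
have zm : z * m <= L / 4.
  have : z * m * M <= L / 4 * M.
    rewrite mulrAC zM; nra.
  by rewrite ler_pM2r.
have z4 : z <= 1 / 4.
  have : z * m <= m / 4 by lra.
  move=> h; nra.
have hM : M - gr * x = M * (1 - z) by rewrite mulrBr mulr1 (mulrC M z) zM.
have key : 2 * m <= x ^+ 2 * (1 - z) ^+ n.
  have h1 : expR (- (L / 2)) <= (1 - z) ^+ n.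
    apply: le_trans (_ : expR (- (2 * z)) ^+ n <= _).
      rewrite -expRM_natr ler_expR -/m; lra.
    apply: lerXn2r; rewrite ?nnegrE ?expR_ge0 //; first lra.
    by apply: one_sub_ge; lra.
  apply: le_trans (_ : x ^+ 2 * expR (- (L / 2)) <= _); last first.
    by apply: ler_wpM2l => //; apply: sqr_ge0.
  rewrite expRN -/E.
  have hx : 4 * (E * E * E) <= x ^+ 2.
    have : (16 * gr * (E * E)) ^+ 2 <= 4 * x ^+ 2 * (16 * E) by rewrite EE; apply: le_trans k1 _; apply: ler_wpM2l; [nra|lra].
    rewrite !expr2 => h.
    have h' : (4 * (E * E * E)) * (64 * E) <= x ^+ 2 * (64 * E).
      have : 1 <= gr * gr by nra.
      rewrite expr2; nra.
    by move: h'; rewrite ler_pM2r //; lra.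
  rewrite ler_pdivlMr //; nra.
split.
  rewrite -(ltr_nat R) natrD !natrM -/x -/gr -/m.
  have : 0 < M - gr * x by rewrite hM; apply: mulr_gt0; lra.
  rewrite /M; lra.
have hle1 : (n <= s * s)%N by rewrite -(ler_nat R) natrM -/x -/m; nra.
have hle2 : (n + g * s <= s * s)%N.
  rewrite -(ler_nat R) natrD !natrM -/x -/m -/gr.
  have : 0 <= M - gr * x by rewrite hM; apply: mulr_ge0; lra.
  rewrite /M; lra.
have hle3 : (g * s <= s * s - n)%N by rewrite leq_subRL // addnC.
rewrite -(ler_nat R) !natrM !natrX (natrB _ hle3) (natrB _ hle1) !natrM -/x -/m -/gr.
rewrite -expr2 -/M hM exprMn mulrCA [X in X <= _]mulrC.
apply: ler_wpM2l => //; apply: exprn_ge0; lra.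
Qed.
End Core2.

Lemma sum_other N k (c : bcoloring N k) (x y : 'I_N) :
  (((~~ (c x y == ord_max)) : nat) = \sum_(a : 'I_k.+1 | a != ord_max) (c x y == a))%N.
Proof.
case: (eqVneq (c x y) ord_max) => h.
  rewrite big1 // => a ne; rewrite h; case: eqP => // E; by rewrite E eqxx in ne.
rewrite (bigD1 (c x y)) //= eqxx big1 ?addn0 // => a /andP [_ ne].
by rewrite eq_sym (negbTE ne).
Qed.

Lemma arrows_of (k t n s : nat) : (0 < t)%N -> (0 < n)%N ->
  (n + 4 * k * (t + 1) * s < s * s)%N ->
  (2 * n * (s * s - n) ^ n <= s * s * (s * s - n - 4 * k * (t + 1) * s) ^ n)%N ->
  br_arrows k t n (s * s).
Proof.
move=> t0 n0 h1 h2 c.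
case: (boolP [exists a : 'I_k.+1, (val a < k)%N && `[< mono_cycle t c a >]]).
  by case/existsP => a /andP [ha /asboolP hm]; left; exists a.
move=> /existsPn hno; right.
have s0 : (0 < s)%N by rewrite lt0n; apply/eqP => E; move: h1; rewrite E !muln0.
have hb : forall a : 'I_k.+1, a != ord_max -> (ecol c a <= 2 * (t + 1) * (s * (s * s)))%N.
  move=> a ne; apply: eb => //.
  have ha : (val a < k)%N.
    have := ltn_ord a; rewrite ltnS leq_eqVlt => /orP [/eqP E|//].
    by move: ne; rewrite (_ : a = ord_max) ?eqxx //; apply: val_inj.
  have nm : ~ mono_cycle t c a.
    by move=> hm; have := hno a; rewrite ha /=; move/asboolPn.
  exact: partA t0 nm.
suff [A [B [hA hB hAB]]] : exists A B : {set 'I_(s * s)}, [/\ #|A| = n, #|B| = n &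
    forall x y, x \in A -> y \in B -> c x y == ord_max].
  by exists A, B; split=> //; split=> // x y xA yB; apply/eqP; apply: hAB.
apply: (@kst (s * s) n (4 * k * (t + 1) * s) (fun x y => c x y == ord_max)) => //.
rewrite (eq_bigr (fun x => \sum_y \sum_(a : 'I_k.+1 | a != ord_max) (c x y == a))%N); last first.
  by move=> x _; apply: eq_bigr => y _; apply: sum_other.
rewrite exchange_big /=.
rewrite (eq_bigr (fun y => \sum_(a : 'I_k.+1 | a != ord_max) \sum_x (c x y == a))%N); last first.
  by move=> y _; rewrite exchange_big.
rewrite exchange_big /=.
apply: (@leq_trans (2 * (k * (2 * (t + 1) * (s * (s * s))))))%N.
  rewrite leq_mul2l; apply/orP; right.
  apply: (@leq_trans (\sum_(a : 'I_k.+1 | a != ord_max) 2 * (t + 1) * (s * (s * s))))%N.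
    apply: leq_sum => a ne; move: (hb a ne); rewrite /ecol exchange_big //.
  rewrite sum_nat_const.
  have -> : #|[pred a : 'I_k.+1 | a != ord_max]| = k.
    by rewrite cardC1 card_ord.
  by [].
nia.
Qed.

Theorem theorem2 (R : realType) (t k : nat) :
  (2 <= t)%N -> (2 <= k)%N ->
  exists c : R, 0 < c /\
    exists n0 : nat, forall n : nat, (n0 <= n)%N ->
      exists N : nat, br_arrows k t n N /\
        (N%:R : R) <= c * (n%:R ^+ 2) / (ln (n%:R : R) ^+ 2).
Proof.
move=> t2 k2.
set g := (4 * k * (t + 1))%N.
have g1 : (1 <= g)%N by rewrite /g; lia.
exists ((16 * g)%:R ^+ 2); split.
  by apply: exprn_gt0; rewrite ltr0n; lia.
exists 3%N => n n3.
have [h1 h2] := @core_real R g n g1 n3.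
set s := Num.truncn _ in h1 h2.
exists (s * s)%N; split.
  by apply: arrows_of => //; lia.
set m : R := n%:R.
set L := ln m.
have m3 : 3 <= m by rewrite /m (ler_nat R 3 n).
have L0 : 0 < L by apply: ln_gt0; lra.
set w := (16 * g)%:R * m / L.
have w0 : 0 <= w by rewrite /w divr_ge0 // ?mulr_ge0 //; lra.
have := truncn_itv w0; rewrite -/s => /andP [xl _].
rewrite natrM.
apply: (@le_trans _ _ (w * w)).
  by apply: ler_pM => //.
have -> : (16 * g)%:R ^+ 2 * m ^+ 2 / L ^+ 2 = w * w.
  by rewrite /w; field; rewrite gt_eqF.
by [].
Qed.
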